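(* The (isomorphism classes of) indecomposable modules are not dense in the space of isomorphism classes of q-tame upper semicontinuous $n$-parameter persistence modules endowed with the interleaving distance.
   Context: Fix a field $\mathbb{k}$ and $n\ge1$. An $n$-parameter persistence module is a functor $V:\mathbf{R}^n\to\mathbf{Vect}_{\mathbb{k}}$ ($\mathbf{R}^n$ with componentwise order), structure maps $V_{s,t}$. Write $s\ll t$ if $s_i<t_i$ for all $i$; $s+\varepsilon$ adds $\varepsilon$ to each coordinate. $V$ is q-tame if $V_{s,t}$ has finite rank whenever $s\ll t$, and upper semicontinuous if $V_s\to\lim_{\varepsilon>0}V_{s+\varepsilon}$ is an isomorphism for all $s$. Shifts $V[\varepsilon]_s=V_{s+\varepsilon}$, $\eta_\varepsilon:V\to V[\varepsilon]$ the structure maps; an $\varepsilon$-interleaving is $f:V\to W[\varepsilon]$, $g:W\to V[\varepsilon]$ with $g[\varepsilon]f=\eta_{2\varepsilon}$, $f[\varepsilon]g=\eta_{2\varepsilon}$; $d_I(V,W)$ is the infimum of $\varepsilon$ admitting an $\varepsilon$-interleaving. *)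

(* Defs.v *)
From HB Require Import structures.
From mathcomp Require Import all_boot all_order all_algebra.
From mathcomp Require Import boolp classical_sets reals constructive_ereal ereal.

Set Implicit Arguments.
Unset Strict Implicit.
Unset Printing Implicit Defensive.

Import Order.TTheory GRing.Theory Num.Theory.
Local Open Scope ring_scope.
Local Open Scope classical_set_scope.

Section PersistenceModules.
Variables (R : realType) (n : nat) (k : fieldType).

Definition pt := 'I_n -> R.
Definition ple (s t : pt) : bool := [forall i, s i <= t i].
Definition pll (s t : pt) : bool := [forall i, s i < t i].
Definition shift (e : R) (s : pt) : pt := fun i => s i + e.

Definition lin_fun (U V : lmodType k) (f : U -> V) : Prop :=
  forall a u v, f (a *: u + v) = a *: f u + f v.

(* An n-parameter persistence module: a functor R^n -> Vect_k.
   Structure maps V_{s,t} are indexed by a (boolean, hence unique) proof of s <= t. *)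
Record pmod := PMod {
  pm_obj : pt -> lmodType k;
  pm_map : forall s t, ple s t -> pm_obj s -> pm_obj t;
  pm_lin : forall s t (h : ple s t), lin_fun (pm_map h);
  pm_id : forall s (h : ple s s) v, pm_map h v = v;
  pm_comp : forall s t u (h1 : ple s t) (h2 : ple t u) (h3 : ple s u) v,
      pm_map h2 (pm_map h1 v) = pm_map h3 v
}.
Arguments pm_map p {s t} _ _.

Definition pm_zero (V : pmod) : Prop := forall s (v : pm_obj V s), v = 0.

Definition pm_iso (V W : pmod) : Prop :=
  exists f : forall s, pm_obj V s -> pm_obj W s,
    [/\ forall s, lin_fun (f s),
        forall s t (h : ple s t) v, f t (pm_map V h v) = pm_map W h (f s v)
      & forall s, bijective (f s)].

Section Sum.
Variables (A B : pmod).
Definition sum_obj (s : pt) : lmodType k := (pm_obj A s * pm_obj B s)%type.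
Definition sum_map s t (h : ple s t) (p : sum_obj s) : sum_obj t :=
  (pm_map A h p.1, pm_map B h p.2).
Lemma sum_lin s t (h : ple s t) : lin_fun (sum_map h).
Proof. by move=> a [u1 u2] [v1 v2]; rewrite /sum_map /= !pm_lin. Qed.
Lemma sum_id s (h : ple s s) v : sum_map h v = v.
Proof. by case: v => v1 v2; rewrite /sum_map /= !pm_id. Qed.
Lemma sum_comp s t u (h1 : ple s t) (h2 : ple t u) (h3 : ple s u) v :
  sum_map h2 (sum_map h1 v) = sum_map h3 v.
Proof. by case: v => v1 v2; rewrite /sum_map /= !(pm_comp _ _ h3). Qed.
Definition pm_sum : pmod := PMod sum_lin sum_id sum_comp.
End Sum.

Definition indecomposable (V : pmod) : Prop :=
  ~ pm_zero V /\
  forall A B : pmod, pm_iso V (pm_sum A B) -> pm_zero A \/ pm_zero B.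

Definition finite_rank (U W : lmodType k) (f : U -> W) : Prop :=
  exists l : seq W, forall v, exists c : 'I_(size l) -> k,
    f v = \sum_(i < size l) c i *: l`_i.

Definition qtame (V : pmod) : Prop :=
  forall s t (h : ple s t), pll s t -> finite_rank (pm_map V h).

(* upper semicontinuous: the canonical map V_s -> lim_{eps>0} V_{s+eps}
   (the limit being the space of compatible families) is bijective
   (equivalently, a linear isomorphism) *)
Definition usc (V : pmod) : Prop :=
  forall s : pt,
    (forall v : pm_obj V s,
        (forall e (h : ple s (shift e s)), 0 < e -> pm_map V h v = 0) -> v = 0)
    /\
    (forall x : forall e : R, pm_obj V (shift e s),
        (forall e e' (h : ple (shift e s) (shift e' s)), 0 < e -> e <= e' ->
            pm_map V h (x e) = x e') ->
        exists v : pm_obj V s,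
          forall e (h : ple s (shift e s)), 0 < e -> pm_map V h v = x e).

Definition interleaving (e : R) (V W : pmod)
    (f : forall s, pm_obj V s -> pm_obj W (shift e s))
    (g : forall s, pm_obj W s -> pm_obj V (shift e s)) : Prop :=
  (forall s, lin_fun (f s)) /\
  (forall s, lin_fun (g s)) /\
  (forall s t (h : ple s t) (h' : ple (shift e s) (shift e t)) v,
      f t (pm_map V h v) = pm_map W h' (f s v)) /\
  (forall s t (h : ple s t) (h' : ple (shift e s) (shift e t)) v,
      g t (pm_map W h v) = pm_map V h' (g s v)) /\
  (forall s (h : ple s (shift e (shift e s))) v,
      g (shift e s) (f s v) = pm_map V h v) /\
  (forall s (h : ple s (shift e (shift e s))) v,
      f (shift e s) (g s v) = pm_map W h v).

Definition interleaved (e : R) (V W : pmod) : Prop :=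
  exists f g, @interleaving e V W f g.

Definition dI (V W : pmod) : \bar R :=
  ereal_inf [set e%:E | e in [set e : R | 0 <= e /\ interleaved e V W]].

End PersistenceModules.

(* Main.v *)
Require Import Defs.
From HB Require Import structures.
From mathcomp Require Import all_boot all_order all_algebra.
From mathcomp Require Import boolp classical_sets reals constructive_ereal ereal.
Import Order.TTheory GRing.Theory Num.Theory.
Local Open Scope ring_scope.



Section K.
Variables (R : realType) (n : nat) (k : fieldType).
Definition kmap (s t : pt R n) (h : ple s t) (x : k^o) : k^o := x.
Arguments kmap {s t}.
Lemma kmap_lin s t h : lin_fun (U := k^o) (V := k^o) (@kmap s t h).
Proof. by []. Qed.
Lemma kmap_id s (h : ple s s) v : kmap h v = v.
Proof. by []. Qed.
Lemma kmap_comp s t w (h1 : ple s t) (h2 : ple t w) (h3 : ple s w) v :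
  kmap h2 (kmap h1 v) = kmap h3 v.
Proof. by []. Qed.
Definition Kpm : pmod R n k := @PMod R n k (fun _ => k^o : lmodType k) (@kmap) kmap_lin kmap_id kmap_comp.
End K.

Section Ker.
Variables (R : realType) (n : nat) (k : fieldType) (W : pmod R n k).
Variable (g : forall t, pm_obj W t -> k).
Hypothesis glin : forall t a u v, g t (a *: u + v) = a * g t u + g t v.
Hypothesis gnat : forall s t (h : ple s t) w, g t (@pm_map _ _ _ W _ _ h w) = g s w.

Lemma g0 t : g t 0 = 0.
Proof.
have := glin t 1 0 0; rewrite scale1r addr0 mul1r => /eqP.
by rewrite -subr_eq0 opprD addrA subrr add0r oppr_eq0 => /eqP.
Qed.
Lemma gD t u v : g t (u + v) = g t u + g t v.
Proof. by have := glin t 1 u v; rewrite scale1r mul1r. Qed.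
Lemma gN t u : g t (- u) = - g t u.
Proof. by rewrite -scaleN1r -(addr0 (_ *: _)) glin g0 addr0 mulN1r. Qed.
Lemma gZ t a u : g t (a *: u) = a * g t u.
Proof. by rewrite -(addr0 (_ *: _)) glin g0 addr0. Qed.

Record kerT (t : pt R n) := KerT { kval : pm_obj W t; kP : g t kval == 0 }.
Arguments kval {t}. Arguments KerT {t}. Arguments kP {t}.
HB.instance Definition _ t := [isSub for @kval t].
HB.instance Definition _ t := [Choice of kerT t by <:].

Section Ops.
Variable t : pt R n.
Definition kzero : kerT t := @KerT t 0 (introT eqP (g0 t)).
Lemma kaddP (a b : kerT t) : g t (kval a + kval b) == 0.
Proof. by rewrite gD (eqP (kP a)) (eqP (kP b)) addr0. Qed.
Definition kadd (a b : kerT t) : kerT t := KerT _ (kaddP a b).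
Lemma koppP (a : kerT t) : g t (- kval a) == 0.
Proof. by rewrite gN (eqP (kP a)) oppr0. Qed.
Definition kopp (a : kerT t) : kerT t := KerT _ (koppP a).
Lemma kscaleP c (a : kerT t) : g t (c *: kval a) == 0.
Proof. by rewrite gZ (eqP (kP a)) mulr0. Qed.
Definition kscale c (a : kerT t) : kerT t := KerT _ (kscaleP c a).
Lemma kaddA : associative kadd.
Proof. by move=> a b c; apply: val_inj; rewrite /= addrA. Qed.
Lemma kaddC : commutative kadd.
Proof. by move=> a b; apply: val_inj; rewrite /= addrC. Qed.
Lemma kadd0 : left_id kzero kadd.
Proof. by move=> a; apply: val_inj; rewrite /= add0r. Qed.
Lemma kaddN : left_inverse kzero kopp kadd.
Proof. by move=> a; apply: val_inj; rewrite /= addNr. Qed.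
End Ops.
Arguments kadd {t}. Arguments kopp {t}. Arguments kscale {t}.
HB.instance Definition _ t := GRing.isZmodule.Build (kerT t) (@kaddA t) (@kaddC t) (@kadd0 t) (@kaddN t).
Section Ops2.
Variable t : pt R n.
Lemma kscaleA a b (v : kerT t) : kscale a (kscale b v) = kscale (a * b) v.
Proof. by apply: val_inj; rewrite /= scalerA. Qed.
Lemma kscale1 : left_id 1 (@kscale t).
Proof. by move=> v; apply: val_inj; rewrite /= scale1r. Qed.
Lemma kscaleDr : right_distributive (@kscale t) +%R.
Proof. by move=> a u v; apply: val_inj; rewrite /= scalerDr. Qed.
Lemma kscaleDl (v : kerT t) : {morph kscale^~ v : a b / a + b}.
Proof. by move=> a b; apply: val_inj; rewrite /= scalerDl. Qed.
End Ops2.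
HB.instance Definition _ t := GRing.Zmodule_isLmodule.Build k (kerT t) (@kscaleA t) (@kscale1 t) (@kscaleDr t) (@kscaleDl t).


Lemma bmapP s t (h : ple s t) (b : kerT s) : g t (@pm_map _ _ _ W _ _ h (kval b)) == 0.
Proof. by rewrite gnat (kP b). Qed.
Definition bmap s t (h : ple s t) (b : kerT s) : kerT t := KerT _ (@bmapP s t h b).
Arguments bmap {s t}.
Lemma bmap_lin s t (h : ple s t) : lin_fun (U := kerT s) (V := kerT t) (bmap h).
Proof. by move=> a x y; apply: val_inj; rewrite /= pm_lin. Qed.
Lemma bmap_id s (h : ple s s) (v : kerT s) : bmap h v = v.
Proof. by apply: val_inj; rewrite /= pm_id. Qed.
Lemma bmap_comp s t w (h1 : ple s t) (h2 : ple t w) (h3 : ple s w) (v : kerT s) :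
  bmap h2 (bmap h1 v) = bmap h3 v.
Proof. by apply: val_inj; rewrite /= (pm_comp _ _ h3). Qed.
Definition Bpm : pmod R n k := @PMod R n k (fun t => kerT t : lmodType k) (@bmap) bmap_lin bmap_id bmap_comp.

Variable u : forall t, pm_obj W t.
Hypothesis gu : forall t, g t (u t) = 1.
Hypothesis unat : forall s t (h : ple s t), @pm_map _ _ _ W _ _ h (u s) = u t.

Lemma phiP t (w : pm_obj W t) : g t (w - g t w *: u t) == 0.
Proof. by rewrite gD gN gZ gu mulr1 subrr. Qed.
Definition phi t (w : pm_obj W t) : pm_obj (pm_sum (Kpm R n k) Bpm) t :=
  ((g t w : k^o), KerT _ (phiP t w)).

Lemma iso_dec : pm_iso W (pm_sum (Kpm R n k) Bpm).
Proof.
exists phi; split.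
- move=> t a x y; rewrite /phi /=.
  apply/eqP; rewrite xpair_eqE; apply/andP; split; apply/eqP => /=.
    by rewrite glin.
  apply: val_inj => /=. rewrite glin scalerDl -scalerA.
  by rewrite scalerBr opprD addrACA.
- move=> s t h v; rewrite /phi.
  apply/eqP; rewrite xpair_eqE; apply/andP; split; apply/eqP => /=.
    by rewrite gnat.
  apply: val_inj => /=.
  by rewrite gnat -(unat s t h) [in RHS]addrC -[in RHS]scaleNr pm_lin scaleNr addrC.
- move=> t; exists (fun p => p.1 *: u t + kval p.2).
    by move=> w /=; rewrite addrC subrK.
  case=> c b; rewrite /phi /=.
  apply/eqP; rewrite xpair_eqE; apply/andP; split; apply/eqP => /=.
    by rewrite glin gu (eqP (kP b)) mulr1 addr0.
  apply: val_inj => /=.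
  by rewrite glin gu (eqP (kP b)) mulr1 addr0 addrAC subrr add0r.
Qed.

Lemma not_indec t (b : pm_obj W t) : b != 0 -> g t b = 0 -> ~ indecomposable W.
Proof.
move=> bn0 gb [_ H]; case: (H _ _ iso_dec) => [zK | zB].
  by have := zK t (1 : k^o); apply/eqP; rewrite oner_neq0.
have := zB t (KerT _ (introT eqP gb)) => /(congr1 kval) /= b0.
by rewrite b0 eqxx in bn0.
Qed.
End Ker.

Lemma lin0 (k : fieldType) (U V : lmodType k) (f : U -> V) : lin_fun f -> f 0 = 0.
Proof.
move=> fl; have := fl 1 0 0; rewrite !scale1r addr0 => /eqP.
by rewrite -subr_eq0 opprD addrA subrr add0r oppr_eq0 => /eqP.
Qed.

Section Main.
Variables (R : realType) (n : nat) (k : fieldType).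
Definition Vpm : pmod R n k := pm_sum (Kpm R n k) (Kpm R n k).

Lemma Vmap s t (h : ple s t) (p : pm_obj Vpm s) : @pm_map _ _ _ Vpm _ _ h p = p.
Proof. by case: p. Qed.

Lemma ple_mono e (s t : pt R n) : ple s t -> ple (shift e s) (shift e t).
Proof. by move=> /forallP H; apply/forallP => i; rewrite /shift lerD2r. Qed.
Lemma ple_back e (t : pt R n) : ple (shift e (shift (- e) t)) t.
Proof. by apply/forallP => i; rewrite /shift subrK. Qed.
Lemma ple_pos e (s : pt R n) : 0 <= e -> ple s (shift e s).
Proof. by move=> e0; apply/forallP => i; rewrite /shift lerDl. Qed.
Lemma ple_le e e' (s : pt R n) : e <= e' -> ple (shift e s) (shift e' s).
Proof. by move=> ee; apply/forallP => i; rewrite /shift lerD2l. Qed.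

Lemma V_qtame : qtame Vpm.
Proof.
move=> s t h _.
exists [:: ((1 : k^o), (0 : k^o)); ((0 : k^o), (1 : k^o))] => v.
exists (fun i => if i == ord0 then v.1 else v.2).
rewrite Vmap !big_ord_recr big_ord0 /=.
case: v => a b; apply/eqP; rewrite xpair_eqE; apply/andP; split; apply/eqP => /=.
  by rewrite scaler0 add0r; change (a = a * 1 + 0); rewrite mulr1 addr0.
by rewrite scaler0 addr0; change (b = 0 + b * 1); rewrite mulr1 add0r.
Qed.

Lemma V_usc : usc Vpm.
Proof.
move=> s; split.
  move=> v H; have := H 1 (ple_pos 1 s ler01) ltr01.
  by rewrite Vmap.
move=> x H; exists (x 1) => e h e0; rewrite Vmap.
case: (lerP e 1) => [le1|/ltW le1].
  by have := H e 1 (ple_le e 1 s le1) e0 le1; rewrite Vmap.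
by have := H 1 e (ple_le 1 e s le1) ltr01 le1; rewrite Vmap.
Qed.

Lemma no_interleave (W : pmod R n k) e : indecomposable W -> 0 <= e ->
  ~ interleaved e Vpm W.
Proof.
move=> Wi e0 [f [g [flin [glin [fnat [gnat [gf fg]]]]]]].
pose gm t (w : pm_obj W t) : k := (g t w).1.
have gmlin : forall t a u v, gm t (a *: u + v) = a * gm t u + gm t v.
  by move=> t a u v; rewrite /gm glin.
have gmnat : forall s t (h : ple s t) w, gm t (@pm_map _ _ _ W _ _ h w) = gm s w.
  by move=> s t h w; rewrite /gm (gnat s t h (ple_mono e s t h)) Vmap.
pose u t : pm_obj W t := @pm_map _ _ _ W _ _ (ple_back e t) (f (shift (- e) t) ((1 : k^o), (0 : k^o))).
have hh : forall s : pt R n, ple s (shift e (shift e s)).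
  move=> s; apply/forallP => i; rewrite /shift -addrA lerDl.
  by rewrite -(addr0 0) lerD.
have gu : forall t, gm t (u t) = 1.
  move=> t; rewrite /u gmnat /gm.
  by rewrite (gf _ (hh _)) Vmap.
have unat : forall s t (h : ple s t), @pm_map _ _ _ W _ _ h (u s) = u t.
  move=> s t h; rewrite /u.
  have h1 : ple (shift (- e) s) (shift (- e) t) by exact: ple_mono.
  have H : ple (shift e (shift (- e) s)) t.
    by apply/forallP => i; rewrite /shift subrK; move/forallP: h.
  rewrite (pm_comp _ _ H).
  have -> : f (shift (- e) t) ((1 : k^o), (0 : k^o)) =
     f (shift (- e) t) (@pm_map _ _ _ Vpm _ _ h1 ((1 : k^o), (0 : k^o))) by [].
  by rewrite (fnat _ _ h1 (ple_mono e _ _ h1)) (pm_comp _ _ H).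
pose s0 : pt R n := fun _ => 0.
pose b := f s0 ((0 : k^o), (1 : k^o)).
have gb : gm (shift e s0) b = 0 by rewrite /gm /b (gf _ (hh _)) Vmap.
have bn0 : b != 0.
  apply/eqP => b0; have := gf s0 (hh _) ((0 : k^o), (1 : k^o)).
  rewrite Vmap -/b b0 lin0 // => /(congr1 snd) /=.
  by move/eqP; rewrite eq_sym oner_eq0.
exact: (@not_indec _ _ _ W gm gmlin gmnat u gu unat _ b bn0 gb Wi).
Qed.
End Main.

Theorem proposition5p7 (R : realType) (k : fieldType) (n : nat) :
  (1 <= n)%N ->
  exists V : pmod R n k,
    [/\ qtame V, usc V &
      exists r : R, 0 < r /\
        forall W : pmod R n k, qtame W -> usc W -> indecomposable W ->
          (r%:E <= dI V W)%E].
Proof.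
move=> _; exists (Vpm R n k); split; [exact: V_qtame | exact: V_usc |].
exists 1; split => // W _ _ Wi.
rewrite /dI; set S := (X in ereal_inf X).
suff -> : S = set0 by rewrite ereal_inf0 leey.
apply/seteqP; split => // x [e [e0 I] _].
by case: (@no_interleave R n k W e Wi e0 I).
Qed.
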